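(* Let $d=1$, let $(X,M)$ have joint law $\mathbb{P}_{X,M}$ with $X\in\mathbb{R}$ and $M\in\{0,1\}$ ($M=0$: $X$ observed), and assume the model $\{P_\theta:\theta\in\Theta\}$ is well specified: $\mathbb{P}_X=P_{\theta^*}$ for some $\theta^*\in\Theta$. Let $\pi(x)=\mathbb{P}[M=0\mid X=x]$ and $\pi=\mathbb{P}[M=0]=\mathbb{E}_{X\sim\mathbb{P}_X}[\pi(X)]>0$, and let $$\theta_\infty^{\mathrm{ML}}\in\arg\min_{\theta\in\Theta}\mathbb{E}_{M\sim\mathbb{P}_M}\big[\mathrm{KL}(\mathbb{P}_{X\mid M}^{(M)}\,\|\,P_\theta^{(M)})\big]=\arg\min_{\theta\in\Theta}\mathrm{KL}(\mathbb{P}_{X\mid M=0}\,\|\,P_\theta).$$ Then $$ \mathrm{TV}^2\big(P_{\theta_\infty^{\mathrm{ML}}},P_{\theta^*}\big)\le 2\cdot\frac{\mathbb{V}_{X\sim\mathbb{P}_X}[\pi(X)]}{\pi^2}. $$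
   Context: $\mathbb{P}_X$ is the law of $X$ (with a Lebesgue density), $\mathbb{P}_{X\mid M=0}$ the conditional law of $X$ given $M=0$. In expectations over $M$ the empty pattern ($M=1$, i.e. $X$ missing) is excluded, which is why the middle expression reduces to the last one. $\mathrm{KL}(P_1\|P_2)=\int\log(p_1/p_2)p_1$ if $P_1\ll P_2$ and $+\infty$ otherwise; $\mathrm{TV}$ is the total variation distance. $\{P_\theta\}$ is a parametric family of distributions on $\mathbb{R}$ with Lebesgue densities. *)

(* Defs.v *)
From mathcomp Require Import all_boot all_order all_algebra.
From mathcomp Require Import all_classical all_reals all_analysis.
Set Implicit Arguments. Unset Strict Implicit. Unset Printing Implicit Defensive.
Import Order.TTheory GRing.Theory Num.Theory.
Local Open Scope classical_set_scope.
Local Open Scope ring_scope.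

Section defs.
Variable R : realType.
Local Notation leb := (@lebesgue_measure.lebesgue_measure R).

Definition is_density (f : R -> R) : Prop :=
  measurable_fun setT f /\ (forall x, 0 <= f x) /\
  (\int[leb]_x (f x)%:E = 1)%E.

Definition dens_meas (f : R -> R) (A : set R) : \bar R :=
  (\int[leb]_(x in A) (f x)%:E)%E.

Definition abs_cont (P1 P2 : set R -> \bar R) : Prop :=
  forall A, measurable A -> P2 A = 0%E -> P1 A = 0%E.

Definition KL (q p : R -> R) : \bar R :=
  if `[< abs_cont (dens_meas q) (dens_meas p) >]
  then (\int[leb]_x (q x * ln (q x / p x))%:E)%E
  else +oo%E.

Definition TV (P1 P2 : set R -> \bar R) : \bar R :=
  ereal_sup [set (`|P1 A - P2 A|)%E | A in measurable].

(* pi = P[M = 0] = E_{X ~ P_X}[pi(X)], X with density pX. *)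
Definition prob_obs (pi pX : R -> R) : R :=
  Rintegral leb setT (fun x => pi x * pX x).

Definition var_obs (pi pX : R -> R) : R :=
  Rintegral leb setT (fun x => (pi x - prob_obs pi pX) ^+ 2 * pX x).

(* Density of the conditional law P_{X | M = 0}: pi(x) pX(x) / P[M=0]. *)
Definition cond_obs_density (pi pX : R -> R) (x : R) : R :=
  pi x * pX x / prob_obs pi pX.
End defs.

(* Main.v *)
Require Import Defs.
From mathcomp Require Import all_boot all_order all_algebra.
From mathcomp Require Import all_classical all_reals all_analysis.
From mathcomp Require Import ring lra.
From mathcomp Require Import measurable_realfun.
Import Order.TTheory GRing.Theory Num.Theory.
Local Open Scope classical_set_scope.
Local Open Scope ring_scope.

Section pt.
Context {R : realType}.

Lemma ln_ge1V {s : R} : 0 < s -> 1 - s^-1 <= ln s.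
Proof.
move=> s0.
have h := @le_ln1Dx R (s^-1 - 1).
have : -1 < s^-1 - 1 by have := invr_gt0 s; rewrite s0; lra.
move/h; rewrite addrC subrK lnV ?posrE //; lra.
Qed.

Lemma phi_ineq {x : R} : 0 <= x ->
  3 * (x - 1) ^+ 2 <= (x * ln x - x + 1) * (4 * x + 5).
Proof.
rewrite le_eqVlt => /predU1P[<-|x0].
  rewrite ln0 // mulr0; lra.
set s := expR (ln x / 3).
have s0 : 0 < s by apply: expR_gt0.
have s3 : s ^+ 3 = x.
  by rewrite /s -expRM_natr mulfVK ?lnK ?posrE // pnatr_eq0.
have lnx : ln x = 3 * ln s.
  by rewrite -s3 lnXn // mulr_natl.
have hs := ln_ge1V s0.
have E : 3 * s ^+ 3 - 3 * s ^+ 2 <= x * ln x.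
  rewrite lnx -s3.
  have -> : 3 * s ^+ 3 - 3 * s ^+ 2 = s ^+ 3 * (3 * (1 - s^-1)).
    by field; rewrite gt_eqF.
  by apply: ler_wpM2l; [rewrite exprn_ge0 // ltW | lra].
set L := x * ln x in E *.
rewrite -s3 in E *.
have key : 0 <= (2 * s ^+ 3 - 3 * s ^+ 2 + 1) * (4 * s ^+ 3 + 5) - 3 * (s ^+ 3 - 1) ^+ 2.
  have -> : (2 * s ^+ 3 - 3 * s ^+ 2 + 1) * (4 * s ^+ 3 + 5) - 3 * (s ^+ 3 - 1) ^+ 2
     = ((s - 1) ^+ 2) ^+ 2 * (5 * s ^+ 2 + 8 * s + 2) by ring.
  by apply: mulr_ge0; [apply: exprn_ge0; apply: sqr_ge0| nra].
have W0 : 0 <= 4 * s ^+ 3 + 5 by have := exprn_gt0 3 s0; lra.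
nra.
Qed.

Lemma lower_pt (q p l : R) : 0 <= q -> 0 < p ->
  2 * l * `|q - p| - l ^+ 2 / 3 * (4 * q + 5 * p) + q - p <= q * ln (q / p).
Proof.
move=> q0 p0.
have [x x0 ->] : exists2 x, 0 <= x & q = x * p.
  by exists (q / p); [rewrite divr_ge0 // ltW | rewrite mulfVK // gt_eqF].
have H := phi_ineq x0.
have -> : `|x * p - p| = `|x - 1| * p.
  by rewrite -{2}(mul1r p) -mulrBl normrM (gtr0_norm p0).
have -> : x * p / p = x by rewrite mulfK // gt_eqF.
set y := `|x - 1|.
have y2 : y ^+ 2 = (x - 1) ^+ 2 by rewrite /y real_normK // num_real.
have y0 : 0 <= y by apply: normr_ge0.
set L := ln x in H *.
have W0 : 0 < 4 * x + 5 by lra.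
have : 2 * l * y - l ^+ 2 / 3 * (4 * x + 5) + x - 1 <= x * L.
  have sq : 0 <= (3 * y - l * (4 * x + 5)) ^+ 2 by apply: sqr_ge0.
  rewrite -subr_ge0.
  have -> : x * L - (2 * l * y - l ^+ 2 / 3 * (4 * x + 5) + x - 1)
     = ((x * L - x + 1) * (4 * x + 5) * 3 - 9 * (x - 1) ^+ 2
        + (3 * y - l * (4 * x + 5)) ^+ 2) / (3 * (4 * x + 5)).
    by rewrite -y2; field; lra.
  apply: divr_ge0; nra.
move=> h.
have -> : 2 * l * (y * p) - l ^+ 2 / 3 * (4 * (x * p) + 5 * p) + x * p - p
   = (2 * l * y - l ^+ 2 / 3 * (4 * x + 5) + x - 1) * p by ring.
rewrite [x * p * _]mulrC -/L mulrA [ln _ * _]mulrC.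
by rewrite ler_pM2r.
Qed.

Lemma tri3 (u v w D Ds : R) : 2 * `|u - v| <= D -> 2 * `|u - w| <= Ds ->
  `|v - w| <= (D + Ds) / 2.
Proof.
move=> h1 h2.
have h3 := ler_distD u v w.
rewrite [`|v - u|]distrC in h3.
lra.
Qed.

Lemma final_ineq (t D Ds chi : R) : 0 <= t -> t <= (D + Ds) / 2 ->
  0 <= D -> 0 <= Ds -> D ^+ 2 <= 3 * chi -> Ds ^+ 2 <= chi ->
  t ^+ 2 <= 2 * chi.
Proof.
move=> t0 tm D0 Ds0 hD hDs.
have h1 : 0 <= ((D + Ds) / 2 - t) * ((D + Ds) / 2 + t) by apply: mulr_ge0; lra.
have h2 : 0 <= (D - Ds) ^+ 2 by apply: sqr_ge0.
nra.
Qed.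

End pt.

Section integ.
Context {R : realType}.
Local Notation mu := (@lebesgue_measure R).
Local Notation int f := (mu.-integrable setT (EFin \o f)).

Lemma intD {f g : R -> R} : int f -> int g -> int (fun x => f x + g x).
Proof. by move=> hf hg; apply: eq_integrable (integrableD _ hf hg). Qed.

Lemma intB {f g : R -> R} : int f -> int g -> int (fun x => f x - g x).
Proof. by move=> hf hg; apply: eq_integrable (integrableB _ hf hg). Qed.

Lemma intZ (k : R) {f : R -> R} : int f -> int (fun x => k * f x).
Proof. by move=> hf; apply: eq_integrable (integrableZl _ k hf). Qed.

Lemma intN {f : R -> R} : int f -> int (fun x => `|f x|).
Proof.
move=> hf; apply: eq_integrable (integrable_abse hf) => //.
Qed.

Lemma int_dom (g f : R -> R) (k : R) : measurable_fun setT g -> int f ->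
  (forall x, `|g x| <= k * f x) -> int g.
Proof.
move=> mg hf H.
eapply le_integrable; last exact: (intZ k hf).
  by [].
  exact/measurable_EFinP.
move=> x _ /=; rewrite lee_fin; apply: (le_trans (H x)).
exact: ler_norm.
Qed.

Lemma dens_int {f} : is_density f -> int f.
Proof.
move=> [mf [f0 f1]]; apply/integrableP; split; first exact/measurable_EFinP.
have -> : (fun x => `|(EFin \o f) x|%E) = (fun x => (f x)%:E).
  by apply/funext => x /=; rewrite ger0_norm.
by rewrite f1 ltry.
Qed.

Lemma dens_int1 {f} : is_density f -> \int[mu]_x f x = 1.
Proof. by move=> [_ [_ f1]]; rewrite /Rintegral f1. Qed.

Lemma dens_measE {f A} : is_density f -> @measurable _ (measurableTypeR R) A ->
  dens_meas f A = (\int[mu]_(x in A) f x)%:E.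
Proof.
move=> hf mA; rewrite /Rintegral fineK //.
apply: integrable_fin_num => //.
by eapply integrableS; [| exact: mA | | exact: dens_int hf].
Qed.

Lemma le_integral_m (f g : R -> \bar R) :
  measurable_fun setT f -> measurable_fun setT g ->
  (forall x, f x <= g x)%E -> (\int[mu]_x f x <= \int[mu]_x g x)%E.
Proof.
move=> mf mg fg.
have fgin : {in setT, forall x, (f x <= g x)%E} by move=> x _; exact: fg.
rewrite integralE [leRHS]integralE leeB//.
- apply: ge0_le_integral => //.
  all: try by apply: measurable_funepos.
  by move=> x _; apply: (funepos_le fgin); rewrite in_setT.
- apply: ge0_le_integral => //.
  all: try by apply: measurable_funeneg.
  by move=> x _; apply: (funeneg_le fgin); rewrite in_setT.
Qed.

Lemma half_tv (q f : R -> R) (A : set R) : int q -> int f ->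
  \int[mu]_x q x = 1 -> \int[mu]_x f x = 1 -> @measurable _ (measurableTypeR R) A ->
  2 * `|\int[mu]_(x in A) q x - \int[mu]_(x in A) f x|
    <= \int[mu]_x `|q x - f x|.
Proof.
move=> hq hf q1 f1 mA.
have mC : @measurable _ (measurableTypeR R) (~` A) by exact: measurableC.
have hqf := intB hq hf.
have hn := intN hqf.
have iS (g : R -> R) B : int g -> measurable B -> mu.-integrable B (EFin \o g).
  by move=> hg mB; eapply integrableS; [| exact: mB | | exact: hg].
have dj : [disjoint A & ~` A] by rewrite /disj_set setICr.
have e1 : \int[mu]_(x in A) (q x - f x) + \int[mu]_(x in ~` A) (q x - f x) = 0.
  rewrite -Rintegral_setU //; last by rewrite [X in integrable _ X _](_ : _ = setT); last exact: setUCr.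
  rewrite [X in Rintegral _ X _](_ : _ = setT); last exact: setUCr.
  by rewrite RintegralB // q1 f1 subrr.
have e2 : \int[mu]_(x in A) `|q x - f x| + \int[mu]_(x in ~` A) `|q x - f x|
    = \int[mu]_x `|q x - f x|.
  rewrite -Rintegral_setU //; last by rewrite [X in integrable _ X _](_ : _ = setT); last exact: setUCr.
  by rewrite [X in Rintegral _ X _](_ : _ = setT); last exact: setUCr.
have l1 := le_normr_Rintegral mA (iS _ _ hqf mA).
have l2 := le_normr_Rintegral mC (iS _ _ hqf mC).
rewrite -(RintegralB mA (iS _ _ hq mA) (iS _ _ hf mA)).
rewrite -e2.
have e3 : \int[mu]_(x in ~` A) (q x - f x) = - \int[mu]_(x in A) (q x - f x) by lra.
move: l2; rewrite e3 normrN; lra.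
Qed.

End integ.


Section main.
Context {R : realType}.
Local Notation mu := (@lebesgue_measure R).
Local Notation int f := (mu.-integrable setT (EFin \o f)).

Lemma measurable_inv_nonneg (f : R -> R) : measurable_fun setT f ->
  (forall x, 0 <= f x) -> measurable_fun setT (fun x => (f x)^-1).
Proof.
move=> mf f0.
have -> : (fun x => (f x)^-1) = (fun x => f x `^ (-1)).
  by apply/funext => x; rewrite powR_inv1.
exact: measurableT_comp (measurable_powR _) mf.
Qed.

Lemma measurable_kl (q f : R -> R) : measurable_fun setT q -> measurable_fun setT f ->
  (forall x, 0 <= f x) -> measurable_fun setT (fun x => q x * ln (q x / f x)).
Proof.
move=> mq mf f0.
apply: measurable_funM => //.
apply: measurableT_comp => //.
apply: measurable_funM => //.
exact: measurable_inv_nonneg.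
Qed.

Lemma kl_lower (q f : R -> R) (l : R) : is_density q -> is_density f ->
  abs_cont (dens_meas q) (dens_meas f) -> 0 < l ->
  ((2 * l * \int[mu]_x `|q x - f x| - 3 * l ^+ 2)%:E
    <= \int[mu]_x (q x * ln (q x / f x))%:E)%E.
Proof.
move=> hq hf hac l0.
have [mq [q0 _]] := hq.
have [mf [f0 _]] := hf.
have iq := dens_int hq.
have iff := dens_int hf.
have q1 := dens_int1 hq.
have f1 := dens_int1 hf.
pose Z := f @^-1` [set 0].
have mZ : @measurable _ (measurableTypeR R) Z.
  have := mf measurableT _ (measurable_set1 0).
  by rewrite setTI.
have fZ : dens_meas f Z = 0%E.
  rewrite /dens_meas (eq_integral (fun=> 0%E)) ?integral0 //.
  by move=> x; rewrite inE /Z /= => ->.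
have qZ : \int[mu]_(x in Z) q x = 0.
  by have := hac Z mZ fZ; rewrite /dens_meas /Rintegral => ->.
pose zq := fun x => if f x == 0 then q x else 0.
have mqZ : measurable_fun setT zq.
  apply: measurable_fun_ifT => //.
  exact: measurable_fun_eqr.
have iqZ : int zq.
  apply: (@int_dom _ _ _ 1 mqZ iq) => x.
  by rewrite /zq; case: ifP => _; rewrite ?normr0 mul1r ?ger0_norm.
have iZ0 : \int[mu]_x zq x = 0.
  rewrite -qZ [RHS]Rintegral_mkcond; apply: eq_Rintegral => x _.
  rewrite patchE /zq; case: ifPn; case: ifPn => //.
    by move=> /negP xZ /eqP fx; exfalso; apply: xZ; apply: mem_set.
  by move=> /set_mem fx; rewrite fx eqxx.
pose h := fun x => 2 * l * `|q x - f x| - l ^+ 2 / 3 * (4 * q x + 5 * f x)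
   + q x - f x - (2 * l + 1) * zq x.
have i1 : int (fun x => 2 * l * `|q x - f x|) by apply: intZ; apply: intN; apply: intB.
have i2 : int (fun x => 4 * q x + 5 * f x) by apply: intD; apply: intZ.
have i3 : int (fun x => l ^+ 2 / 3 * (4 * q x + 5 * f x)) by apply: intZ.
have i4 : int (fun x => 2 * l * `|q x - f x| - l ^+ 2 / 3 * (4 * q x + 5 * f x)) by apply: intB.
have i5 : int (fun x => 2 * l * `|q x - f x| - l ^+ 2 / 3 * (4 * q x + 5 * f x) + q x) by apply: intD.
have i6 : int (fun x => 2 * l * `|q x - f x| - l ^+ 2 / 3 * (4 * q x + 5 * f x) + q x - f x) by apply: intB.
have i7 : int (fun x => (2 * l + 1) * zq x) by apply: intZ.
have ih : int h by apply: intB.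
have Eh : \int[mu]_x h x = 2 * l * \int[mu]_x `|q x - f x| - 3 * l ^+ 2.
  rewrite /h (RintegralB measurableT i6 i7) (RintegralB measurableT i5 iff).
  rewrite (RintegralD measurableT i4 iq) (RintegralB measurableT i1 i3).
  rewrite (RintegralZl _ measurableT (intN (intB iq iff))).
  rewrite (RintegralZl _ measurableT i2) (RintegralD measurableT (intZ 4 iq) (intZ 5 iff)).
  rewrite (RintegralZl _ measurableT iq) (RintegralZl _ measurableT iff).
  rewrite (RintegralZl _ measurableT iqZ) iZ0 q1 f1.
  by field.
have eh : ((\int[mu]_x h x)%:E = \int[mu]_x (h x)%:E)%E.
  by rewrite /Rintegral fineK // integrable_fin_num.
rewrite -Eh eh; apply: le_integral_m.
- exact: measurable_int ih.
- by apply/measurable_EFinP; exact: measurable_kl.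
move=> x; rewrite lee_fin /h /zq.
have := q0 x; have := f0 x; rewrite le_eqVlt => /predU1P[fx0|fx0] qx0.
  have hz : q x * ln (q x / f x) = 0 by rewrite -fx0 invr0 mulr0 ln0 ?mulr0.
  have eq1 : (f x == 0) = true by rewrite -fx0 eqxx.
  rewrite hz eq1 (ger0_norm (x := q x - f x)); last lra.
  have : 0 <= l ^+ 2 * q x by apply: mulr_ge0 => //; apply: sqr_ge0.
  have e1 : l * f x = 0 by rewrite -fx0 mulr0.
  have e2 : l ^+ 2 * f x = 0 by rewrite -fx0 mulr0.
  nra.
rewrite gt_eqF // mulr0 subr0.
exact: lower_pt.
Qed.

Section cond.
Variables (pi ps : R -> R).
Hypotheses (hps : is_density ps) (mpi : measurable_fun setT pi)
  (pi01 : forall x, 0 <= pi x <= 1) (c0 : 0 < prob_obs pi ps).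
Local Notation c := (prob_obs pi ps).
Local Notation q := (cond_obs_density pi ps).

Let mps : measurable_fun setT ps. Proof. by case: hps. Qed.
Let ps0 x : 0 <= ps x. Proof. by case: hps => _ []. Qed.
Let ips : int ps. Proof. exact: dens_int. Qed.
Let ps1 : \int[mu]_x ps x = 1. Proof. exact: dens_int1. Qed.

Lemma qE x : q x = pi x / c * ps x.
Proof. by rewrite /cond_obs_density mulrAC. Qed.

Lemma mq : measurable_fun setT q.
Proof.
rewrite /cond_obs_density; apply: measurable_funM => //.
exact: measurable_funM.
Qed.

Lemma q0 x : 0 <= q x.
Proof.
have := pi01 x => /andP[p0 _].
by rewrite qE mulr_ge0 // divr_ge0 // ltW.
Qed.

Lemma q_bound x : `|q x| <= c^-1 * ps x.
Proof.
have := pi01 x => /andP[p0 p1].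
rewrite ger0_norm ?q0 // qE -subr_ge0.
have -> : c^-1 * ps x - pi x / c * ps x = (1 - pi x) * ps x / c.
  by field; rewrite gt_eqF.
by rewrite divr_ge0 ?mulr_ge0 ?ps0 ?subr_ge0 // ltW.
Qed.

Lemma iq : int q.
Proof. exact: int_dom mq ips q_bound. Qed.

Lemma ipips : int (fun x => pi x * ps x).
Proof.
apply: (@int_dom _ _ _ 1 _ ips) => [|x].
  exact: measurable_funM.
have := pi01 x => /andP[p0 p1].
by rewrite mul1r ger0_norm ?mulr_ge0 // ler_piMl.
Qed.

Lemma q1 : \int[mu]_x q x = 1.
Proof.
rewrite /cond_obs_density (RintegralZr _ measurableT ipips).
by rewrite -/(prob_obs pi ps) divff // gt_eqF.
Qed.

Lemma hq : is_density q.
Proof.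
split; first exact: mq.
split; first exact: q0.
by rewrite -[1%E]/((1:R)%:E) -q1 /Rintegral fineK // integrable_fin_num // iq.
Qed.

Lemma ac : abs_cont (dens_meas q) (dens_meas ps).
Proof.
move=> A mA0.
have mA : @measurable _ (measurableTypeR R) A := mA0.
rewrite (dens_measE hps mA) (dens_measE hq mA) => -[] ps0A.
congr (_%:E); apply: le_anti; rewrite Rintegral_ge0 ?andbT //; last by move=> x _; exact: q0.
have iA (g : R -> R) : int g -> mu.-integrable A (EFin \o g).
  by move=> hg; eapply integrableS; [| exact: mA | | exact: hg].
apply: le_trans (le_Rintegral mA (iA _ iq) (iA _ (intZ c^-1 ips)) _) _.
  by move=> x _; apply: le_trans (q_bound x); exact: ler_norm.
by rewrite (RintegralZl _ mA (iA _ ips)) ps0A mulr0.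
Qed.



Let ab x : 0 <= pi x / c <= c^-1.
Proof.
have := pi01 x => /andP[p0 p1].
have ci : 0 < c^-1 by rewrite invr_gt0.
apply/andP; split; [apply: divr_ge0 => //; exact: ltW | nra].
Qed.

Lemma ia2 : int (fun x => (pi x / c - 1) ^+ 2 * ps x).
Proof.
apply: (@int_dom _ _ _ ((c^-1 + 1) ^+ 2) _ ips) => [|x].
  apply: measurable_funM => //; apply: measurable_funX.
  by apply: measurable_funB => //; apply: measurable_funM.
have := ab x => /andP[a0 a1].
rewrite ger0_norm; last by rewrite mulr_ge0 // sqr_ge0.
apply: ler_wpM2r => //.
have ci : 0 < c^-1 by rewrite invr_gt0.
nra.
Qed.

Lemma ipc2 : int (fun x => (pi x - c) ^+ 2 * ps x).
Proof.
apply: (@int_dom _ _ _ ((1 + c) ^+ 2) _ ips) => [|x].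
  apply: measurable_funM => //; apply: measurable_funX.
  by apply: measurable_funB.
have := pi01 x => /andP[a0 a1].
rewrite ger0_norm; last by rewrite mulr_ge0 // sqr_ge0.
apply: ler_wpM2r => //.
have cc := c0.
have h1 : 0 <= (1 + 2 * c - pi x) * (1 + pi x).
  by apply: mulr_ge0; lra.
nra.
Qed.

Lemma chiE : \int[mu]_x ((pi x / c - 1) ^+ 2 * ps x) = var_obs pi ps / c ^+ 2.
Proof.
rewrite /var_obs -(RintegralZr _ measurableT ipc2).
apply: eq_Rintegral => x _.
by field; rewrite gt_eqF.
Qed.

Lemma kl_up : (KL q ps <= (var_obs pi ps / c ^+ 2)%:E)%E.
Proof.
rewrite /KL asboolT; last exact: ac.
have iaa : int (fun x => (pi x / c - 1) ^+ 2 * ps x + (q x - ps x)).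
  by apply: intD; [exact: ia2| apply: intB; [exact: iq| exact: ips]].
have E : \int[mu]_x ((pi x / c - 1) ^+ 2 * ps x + (q x - ps x)) = var_obs pi ps / c ^+ 2.
  rewrite (RintegralD measurableT ia2 (intB iq ips)) chiE.
  by rewrite (RintegralB measurableT iq ips) q1 ps1 subrr addr0.
rewrite -E /Rintegral fineK; last by rewrite integrable_fin_num.
apply: le_integral_m.
- apply/measurable_EFinP; apply: measurable_kl => //; exact: mq.
- exact: measurable_int iaa.
move=> x; rewrite lee_fin qE.
have := ab x => /andP[a0 _].
have [p0|p0] : ps x = 0 \/ 0 < ps x.
  by move: (ps0 x); rewrite le_eqVlt => /predU1P[<-|]; [left|right].
  by rewrite p0 !mulr0 invr0 mulr0 ln0 ?mulr0 // subrr addr0.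
rewrite mulfK ?gt_eqF //.
have -> : (pi x / c - 1) ^+ 2 * ps x + (pi x / c * ps x - ps x)
  = pi x / c * (pi x / c - 1) * ps x by ring.
rewrite [_ * ps x * _]mulrAC ler_pM2r //.
move: a0; rewrite le_eqVlt => /predU1P[<-|a0]; first by rewrite !mul0r.
apply: ler_wpM2l; first exact: ltW.
have := le_ln1Dx (x := pi x / c - 1).
rewrite addrCA subrr addr0; apply.
lra.
Qed.

Lemma Dstar : (\int[mu]_x `|q x - ps x|) ^+ 2 <= var_obs pi ps / c ^+ 2.
Proof.
set D := \int[mu]_x `|q x - ps x|.
set chi := var_obs pi ps / c ^+ 2.
have D0 : 0 <= D by apply: Rintegral_ge0 => x _.
have key l : 0 < l -> D <= l / 2 + chi / (2 * l).
  move=> l0.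
  have i1 : int (fun x => l / 2 * ps x + (2 * l)^-1 * ((pi x / c - 1) ^+ 2 * ps x)).
    by apply: intD; apply: intZ => //; exact: ia2.
  apply: le_trans (le_Rintegral measurableT (intN (intB iq ips)) i1 _) _.
    move=> x _; rewrite qE.
    have -> : pi x / c * ps x - ps x = (pi x / c - 1) * ps x by ring.
    rewrite normrM (ger0_norm (ps0 x)).
    set y := pi x / c - 1.
    have -> : `|y| * ps x = ps x * `|y| by rewrite mulrC.
    have yy : `|y| ^+ 2 = y ^+ 2 by rewrite real_normK // num_real.
    have psx := ps0 x.
    have ny := normr_ge0 y.
    rewrite -subr_ge0.
    have -> : l / 2 * ps x + (2 * l)^-1 * (y ^+ 2 * ps x) - ps x * `|y|
      = ps x * (`|y| - l) ^+ 2 / (2 * l).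
      by rewrite -yy; field; rewrite gt_eqF.
    by apply: divr_ge0; [apply: mulr_ge0 => //; exact: sqr_ge0 | lra].
  rewrite (RintegralD measurableT (intZ _ ips) (intZ _ ia2)).
  rewrite (RintegralZl _ measurableT ips) (RintegralZl _ measurableT ia2) ps1 chiE.
  by rewrite -/chi mulr1 [(2 * l)^-1 * chi]mulrC.
move: D0; rewrite le_eqVlt => /predU1P[<-|Dp].
  rewrite expr0n /= /chi divr_ge0 ?sqr_ge0 //.
  by apply: Rintegral_ge0 => x _; rewrite mulr_ge0 ?sqr_ge0 ?ps0.
have := key D Dp.
move=> h.
have : D * D <= D * (D / 2 + chi / (2 * D)) by rewrite ler_pM2l.
have -> : D * (D / 2 + chi / (2 * D)) = D ^+ 2 / 2 + chi / 2.
  by field; rewrite gt_eqF.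
rewrite -expr2; lra.
Qed.

End cond.
End main.


Theorem theorem5 (R : realType) (Theta : Type) (p : Theta -> R -> R)
  (theta_star theta_ML : Theta) (pi : R -> R) :
  (forall th : Theta, is_density (p th)) ->
  measurable_fun setT pi ->
  (forall x, 0 <= pi x <= 1) ->
  0 < prob_obs pi (p theta_star) ->
  (forall th : Theta,
     (KL (cond_obs_density pi (p theta_star)) (p theta_ML)
      <= KL (cond_obs_density pi (p theta_star)) (p th))%E) ->
  (TV (dens_meas (p theta_ML)) (dens_meas (p theta_star)) ^+ 2
   <= (2 * (var_obs pi (p theta_star) / prob_obs pi (p theta_star) ^+ 2))%:E)%E.
Proof.
move=> Hd mpi pi01 c0 Hmin.
have hs := Hd theta_star.
have hm := Hd theta_ML.
move: Hmin c0 hs hm.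
set ps := p theta_star.
set pm := p theta_ML.
move=> Hmin c0 hs hm.
set chi := var_obs pi ps / prob_obs pi ps ^+ 2.
set q := cond_obs_density pi ps.
have hqd : is_density q := hq pi ps hs mpi pi01 c0.
have klup : (KL q ps <= chi%:E)%E := kl_up pi ps hs mpi pi01 c0.
have klm : (KL q pm <= chi%:E)%E := le_trans (Hmin theta_star) klup.
have acm : abs_cont (dens_meas q) (dens_meas pm).
  move: klm; rewrite /KL; case: asboolP => // _.
have klmE : KL q pm = (\int[lebesgue_measure]_x (q x * ln (q x / pm x))%:E)%E.
  by rewrite /KL asboolT.
have Ds2 := Dstar pi ps hs mpi pi01 c0.
set Ds := \int[lebesgue_measure]_x `|q x - ps x| in Ds2.
set D := \int[lebesgue_measure]_x `|q x - pm x|.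
have chi0 : 0 <= chi by apply: le_trans Ds2; exact: sqr_ge0.
have D0 : 0 <= D by apply: Rintegral_ge0 => x _.
have Ds0 : 0 <= Ds by apply: Rintegral_ge0 => x _.
have key l : 0 < l -> 2 * l * D - 3 * l ^+ 2 <= chi.
  move=> l0; rewrite -lee_fin.
  apply: le_trans (kl_lower q pm l hqd hm acm l0) _.
  by rewrite -klmE.
have D2 : D ^+ 2 <= 3 * chi.
  move: D0; rewrite le_eqVlt => /predU1P[<-|Dp].
    by rewrite expr0n /=; lra.
  have := key (D / 3).
  have -> : 2 * (D / 3) * D - 3 * (D / 3) ^+ 2 = D ^+ 2 / 3 by field.
  move=> /(_ _); rewrite divr_gt0 // => /(_ isT) h.
  lra.
have iqq := dens_int hqd.
have ipm := dens_int hm.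
have ips := dens_int hs.
have q1 := dens_int1 hqd.
have pm1 := dens_int1 hm.
have ps1 := dens_int1 hs.
have TVle : (TV (dens_meas pm) (dens_meas ps) <= ((D + Ds) / 2)%:E)%E.
  apply: ge_ereal_sup => _ [A mA0 <-].
  have mA : @measurable _ (measurableTypeR R) A := mA0.
  rewrite (dens_measE hm mA) (dens_measE hs mA) /= lee_fin.
  have h1 := half_tv _ _ _ iqq ipm q1 pm1 mA.
  have h2 := half_tv _ _ _ iqq ips q1 ps1 mA.
  exact: tri3 h1 h2.
have TV0 : (0 <= TV (dens_meas pm) (dens_meas ps))%E.
  apply: ereal_sup_ubound; exists set0 => //.
  by rewrite /dens_meas !integral_set0 sube0 abse0.
have TVf : TV (dens_meas pm) (dens_meas ps) = (fine (TV (dens_meas pm) (dens_meas ps)))%:E.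
  rewrite fineK // ge0_fin_numE //; exact: le_lt_trans TVle (ltry _).
move: TVle TV0; rewrite TVf -EFin_expe !lee_fin.
move=> h1 h0.
exact: final_ineq h0 h1 D0 Ds0 D2 Ds2.
Qed.
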